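(* Let $(x_k)_{k\ge0}$ be indeterminates, define $a_n=x_n$ if $n=2^k-1$ for some integer $k\ge0$ and $a_n=0$ otherwise, and let $D(n)=\det\left(a_{i+j+1}\right)_{i,j=0}^{n-1}$ with $D(0)=1$. For $k\ge1$ and $n\ge0$ let $\mu_k(n)$ be the degree of $D(n)$ in the variable $x_{2^k-1}$. Then for every $k\ge1$ and $0\le i\le 2^{k-1}-1$: $$\mu_k(i)=0,\quad \mu_k(2^{k-1}+i)=2i+1,\quad \mu_k(2^k+i)=2^k-2i-1,\quad \mu_k(2^k+2^{k-1}+i)=0,$$ and for $n\ge 2^{k+1}$, $\mu_k(n)=\mu_k(n\bmod 2^{k+1})$.
   Context: The paper writes $D(n)=(-1)^{\sum_i\binom{\mu_i(n)}{2}}\prod_{i\ge1}x_{2^i-1}^{\mu_i(n)}$, so $\mu_i(n)$ is the exponent of $x_{2^i-1}$ in $D(n)$. *)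

(* Defs.v *)
From HB Require Import structures.
From mathcomp Require Import all_boot all_order all_algebra.
From mathcomp Require Import finmap.
From mathcomp Require Import mpoly.
Set Implicit Arguments. Unset Strict Implicit. Unset Printing Implicit Defensive.
Import GRing.Theory.
Local Open Scope ring_scope.

(* [is_pow2m1 n] : n = 2^k - 1 for some k >= 0 (necessarily k <= n). *)
Definition is_pow2m1 (n : nat) : bool :=
  has (fun k => n == (2 ^ k - 1)%N) (iota 0 n.+1).

(* The variable x_m inside {mpoly int[N]} (variables x_0, ..., x_{N-1});
   the zero polynomial if m >= N (never used in that case below). *)
Definition xvar (N m : nat) : {mpoly int[N]} :=
  match insub m with Some i => 'X_i | None => 0 end.

Definition a_seq (N m : nat) : {mpoly int[N]} :=
  if is_pow2m1 m then xvar N m else 0.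

(* D(n) = det (a_{i+j+1})_{i,j=0}^{n-1}; all indices i+j+1 are <= 2n-1,
   so D(n) lives in the polynomial ring in x_0, ..., x_{2n-1}.  D(0) = 1
   (determinant of the empty matrix). *)
Definition D (n : nat) : {mpoly int[2 * n]} :=
  \det (\matrix_(i < n, j < n) a_seq (2 * n) (i + j + 1)%N).

(* degree of p in the variable x_m (0 if x_m is not among the variables,
   i.e. it does not occur in p); for p = 0 this is 0. *)
Definition degvar (N : nat) (p : {mpoly int[N]}) (m : nat) : nat :=
  match insub m with
  | Some i => \max_(mm <- msupp p) (mm : 'X_{1..N}) i
  | None => 0%N
  end.

Definition mu (k n : nat) : nat := degvar (D n) (2 ^ k - 1).

(* Main.v *)
Require Import Defs.
From mathcomp Require Import all_boot all_order all_algebra.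
From mathcomp Require Import finmap.
From mathcomp Require Import mpoly.
From mathcomp Require Import zify perm fingroup ring.
Set Implicit Arguments. Unset Strict Implicit. Unset Printing Implicit Defensive.
Import GRing.Theory.
Local Open Scope ring_scope.

Lemma det_reindex (R : comNzRingType) n (f g : 'I_n -> 'I_n) (M : 'M[R]_n) :
  injective f -> injective g ->
  exists b : bool, \det M = (-1) ^+ b * \det (\matrix_(i, j) M (f i) (g j)).
Proof.
move=> fi gi; pose s := perm fi; pose t := perm gi.
have -> : \matrix_(i, j) M (f i) (g j) = row_perm s (col_perm t M).
  by apply/matrixP => i j; rewrite !mxE !permE.
rewrite row_permE col_permE !det_mulmx !det_perm.
exists (odd_perm s (+) odd_perm t^-1).
rewrite signr_addb.
set u := (-1) ^+ odd_perm s; set v := (-1) ^+ odd_perm t^-1.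
have uu : u * u = 1 by rewrite /u -signr_addb addbb.
have vv : v * v = 1 by rewrite /v -signr_addb addbb.
transitivity (u * u * (v * v) * \det M); first by rewrite uu vv !mul1r.
by ring.
Qed.

Lemma det_block (R : comNzRingType) n p q (g : nat -> nat -> R) (phi psi : nat -> nat) :
  (p + q = n)%N ->
  (forall i, i < n -> phi i < n)%N -> (forall i, i < n -> psi i < n)%N ->
  (forall i j, i < n -> j < n -> phi i = phi j -> i = j)%N ->
  (forall i j, i < n -> j < n -> psi i = psi j -> i = j)%N ->
  (forall a b, (a < p)%N -> (b < q)%N -> g (phi a) (psi (p + b)%N) = 0) ->
  exists b : bool, \det (\matrix_(i < n, j < n) g i j) = (-1) ^+ b *
    (\det (\matrix_(a < p, c < p) g (phi a) (psi c)) *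
     \det (\matrix_(a < q, c < q) g (phi (p + a)%N) (psi (p + c)%N))).
Proof.
move=> <- Hphi Hpsi Iphi Ipsi H0.
pose f (i : 'I_(p + q)) : 'I_(p + q) := Ordinal (Hphi i (ltn_ord i)).
pose f' (i : 'I_(p + q)) : 'I_(p + q) := Ordinal (Hpsi i (ltn_ord i)).
have fi : injective f.
  by move=> i j /(congr1 val) /= /Iphi => h; apply/val_inj/h.
have fi' : injective f'.
  by move=> i j /(congr1 val) /= /Ipsi => h; apply/val_inj/h.
have [b ->] := det_reindex (\matrix_(i < p + q, j < p + q) g i j) fi fi'.
exists b; congr (_ * _).
set X := \matrix_(i, j) _.
rewrite -[X]submxK.
have -> : ursubmx X = 0.
  by apply/matrixP => i j; rewrite !mxE /= H0.
rewrite det_lblock; congr (_ * _); congr (\det _); apply/matrixP => i j; by rewrite !mxE.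
Qed.

Lemma odd_sum_odd n (F : 'I_n -> nat) : (forall i, odd (F i)) ->
  odd (\sum_(i < n) F i)%N = odd n.
Proof.
move=> HF; have -> : odd n = odd (\sum_(i < n) 1)%N by rewrite sum1_card card_ord.
apply: (big_rec2 (fun x y => odd x = odd y)) => // i x y _ Hxy.
by rewrite !oddD HF Hxy.
Qed.

Lemma det_anti_odd (R : comNzRingType) n (M : 'M[R]_n) : odd n ->
  (forall i j : 'I_n, ~~ odd (i + j) -> M i j = 0) -> \det M = 0.
Proof.
move=> on HM; rewrite /(\det M) big1 // => s _.
case: (pickP (fun i : 'I_n => ~~ odd (i + s i))) => [i Hi | H].
  by rewrite (bigD1 i) //= HM // mul0r mulr0.
exfalso.
have e1 : (\sum_(i < n) (s i : nat) = \sum_(i < n) (i : nat))%N.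
  by rewrite (reindex_inj (@perm_inj _ s^-1)) /=; apply: eq_bigr => i _; rewrite permKV.
have : odd (\sum_(i < n) (i + s i))%N = odd n.
  by apply: odd_sum_odd => i; move: (H i) => /= /negbT; rewrite negbK.
rewrite big_split /= e1 addnn odd_double.
by rewrite on.
Qed.

Lemma det_expand00 (R : comNzRingType) m (M M0 : 'M[R]_m.+1) :
  (forall i j, (i != 0) || (j != 0) -> M i j = M0 i j) ->
  \det M = \det M0 + (M 0 0 - M0 0 0) * \det (row' 0 (col' 0 M)).
Proof.
move=> HM.
have ec : forall j, cofactor M 0 j = cofactor M0 0 j.
  move=> j; rewrite /cofactor; congr (_ * \det _).
  by apply/matrixP => i k; rewrite !mxE HM // neq_lift.
rewrite (expand_det_row M 0) (expand_det_row M0 0) !big_ord_recl.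
have -> : \sum_(i < m) M 0 (lift 0 i) * cofactor M 0 (lift 0 i) =
          \sum_(i < m) M0 0 (lift 0 i) * cofactor M0 0 (lift 0 i).
  by apply: eq_bigr => i _; rewrite ec HM // neq_lift orbT.
rewrite -ec /cofactor /= expr0 mul1r.
by ring.
Qed.

Lemma is_pow2m1P n : reflect (exists k, n = 2 ^ k - 1)%N (is_pow2m1 n).
Proof.
apply: (iffP hasP) => [[k _ /eqP ->]|[k ->]]; first by exists k.
exists k => //; rewrite mem_iota /= add0n ltnS.
have := ltn_expl k (isT : 1 < 2)%N; lia.
Qed.

Lemma pow2m1_odd s : is_pow2m1 (2 * s + 1) = is_pow2m1 s.
Proof.
apply/is_pow2m1P/is_pow2m1P => [[k Hk]|[k Hk]].
  case: k Hk => [|k]; first by rewrite expn0; lia.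
  rewrite expnS => Hk; exists k; have := expn_gt0 2 k; lia.
exists k.+1; rewrite expnS; have := expn_gt0 2 k; lia.
Qed.

Lemma pow2m1_even s : is_pow2m1 (2 * s + 2) = false.
Proof.
apply/negbTE/negP => /is_pow2m1P [[|k]]; first by rewrite expn0; lia.
rewrite expnS; have := expn_gt0 2 k; lia.
Qed.

Definition aa (R : comNzRingType) (x : nat -> R) (t : nat) : R :=
  if is_pow2m1 t then x t else 0.
Definition Ex (R : comNzRingType) (x : nat -> R) n :=
  \det (\matrix_(i < n, j < n) aa x (i + j + 1)).
Definition Fx (R : comNzRingType) (x : nat -> R) n :=
  \det (\matrix_(i < n, j < n) aa x (i + j)).
Definition sh (R : comNzRingType) (x : nat -> R) s := x (2 * s + 1)%N.

Lemma aa_odd (R : comNzRingType) (x : nat -> R) s :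
  aa x (2 * s + 1) = aa (sh x) s.
Proof. by rewrite /aa pow2m1_odd. Qed.

Lemma aa_even (R : comNzRingType) (x : nat -> R) t :
  ~~ odd t -> (0 < t)%N -> aa x t = 0.
Proof.
move=> et pt; have -> : t = (2 * t./2.-1 + 2)%N.
  by have := odd_double_half t; rewrite (negbTE et) -muln2; lia.
by rewrite /aa pow2m1_even.
Qed.

Lemma aa0 (R : comNzRingType) (x : nat -> R) : aa x 0 = x 0%N.
Proof. by []. Qed.

Lemma not_odd2 t k : t = (2 * k)%N -> ~~ odd t.
Proof. by move=> ->; rewrite mul2n odd_double. Qed.

Definition ev_first p i := if (i < p)%N then (2 * i)%N else (2 * (i - p) + 1)%N.
Definition od_first p i := if (i < p)%N then (2 * i + 1)%N else (2 * (i - p))%N.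

Lemma Ex_step (R : comNzRingType) (x : nat -> R) n :
  exists b : bool, Ex x n = (-1) ^+ b * (Fx (sh x) (uphalf n) * Ex (sh x) n./2).
Proof.
have hp1 : (uphalf n + n./2 = n)%N.
  by have := odd_double_half n; rewrite uphalf_half -muln2; case: (odd n); lia.
have hp2 : (n <= 2 * uphalf n <= n.+1)%N.
  by have := odd_double_half n; rewrite uphalf_half -muln2; case: (odd n); lia.
destruct (@det_block R n (uphalf n) n./2 (fun i j => aa x (i + j + 1))
   (ev_first (uphalf n)) (ev_first (uphalf n))) as [b Hb].
- exact: hp1.
- move=> i; rewrite /ev_first; case: ifP; lia.
- move=> i; rewrite /ev_first; case: ifP; lia.
- move=> i j; rewrite /ev_first; case: ifP; case: ifP; lia.
- move=> i j; rewrite /ev_first; case: ifP; case: ifP; lia.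
- move=> a b' ha hb; rewrite /ev_first ha ifF; last by lia.
  apply: aa_even; last by lia.
  by apply: (@not_odd2 _ (a + b' + 1)); lia.
exists b; rewrite /Ex Hb; congr (_ * (_ * _)); rewrite /Fx; congr (\det _);
  apply/matrixP => i j; rewrite !mxE /ev_first.
- by rewrite !ltn_ord -aa_odd; congr (aa _ _); lia.
- rewrite !ifF; try lia; rewrite -aa_odd; congr (aa _ _); lia.
Qed.

Lemma Fx_step (R : comNzRingType) (x : nat -> R) m :
  exists b : bool, Fx x m.+1 = (-1) ^+ b *
    (if odd m.+1 then x 0%N * Ex (sh x) m./2 ^+ 2 else Fx (sh x) (m.+1)./2 ^+ 2).
Proof.
pose bb t := if t == 0%N then 0 else aa x t.
have bb_even : forall t, ~~ odd t -> bb t = 0.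
  move=> t et; rewrite /bb; case: eqP => // /eqP t0; apply: aa_even => //; lia.
rewrite /Fx (@det_expand00 R m _ (\matrix_(i < m.+1, j < m.+1) bb (i + j)%N)); last first.
  move=> i j hij; rewrite !mxE /bb ifF //; apply/negbTE; move: hij.
  by case: i j => [[|i] hi] [[|j] hj].
rewrite !mxE /bb eqxx subr0 aa0.
have -> : row' 0 (col' 0 (\matrix_(i < m.+1, j < m.+1) aa x (i + j)%N)) =
          \matrix_(i < m, j < m) aa x (i + j + 2)%N.
  by apply/matrixP => i j; rewrite !mxE !lift0; congr (aa _ _); lia.
case: (boolP (odd m)) => om /=; rewrite om /=.
- rewrite (@det_anti_odd R m _ om); last first.
    move=> i j hij; rewrite mxE; apply: aa_even; last by lia.
    by apply: (@not_odd2 _ ((i + j)./2 + 1)); have := odd_double_half (i + j); move/negbTE: hij => ->; rewrite -muln2; lia.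
  have hp : (2 * (m.+1)./2 = m.+1)%N.
    by have := odd_double_half m.+1; rewrite /= om -muln2; lia.
  destruct (@det_block R m.+1 (m.+1)./2 (m.+1)./2 (fun i j => bb (i + j)%N)
     (ev_first (m.+1)./2) (od_first (m.+1)./2)) as [b Hb].
  + lia.
  + move=> i; rewrite /ev_first; case: ifP; lia.
  + move=> i; rewrite /od_first; case: ifP; lia.
  + move=> i j; rewrite /ev_first; case: ifP; case: ifP; lia.
  + move=> i j; rewrite /od_first; case: ifP; case: ifP; lia.
  + move=> a b' ha hb; rewrite /ev_first /od_first ha ifF; last by lia.
    by apply: bb_even; apply: (@not_odd2 _ (a + b')); lia.
  exists b; rewrite Hb mulr0 addr0 expr2; congr (_ * (_ * _)); congr (\det _);
    apply/matrixP => i j; rewrite !mxE /ev_first /od_first.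
  * rewrite !ltn_ord /bb ifF; last by lia.
    by rewrite -aa_odd mulnDr addnA.
  * rewrite !ifF; try lia; rewrite /bb ifF; last by lia.
    rewrite -aa_odd; congr (aa _ _); move: (i : nat) (j : nat) => i0 j0; clear; lia.
- rewrite (@det_anti_odd R m.+1 _); last first.
  + move=> i j hij; rewrite mxE; exact: bb_even.
  + by rewrite /= om.
  have hp : (2 * m./2 = m)%N.
    by have := odd_double_half m; rewrite (negbTE om) -muln2; lia.
  destruct (@det_block R m m./2 m./2 (fun i j => aa x (i + j + 2)%N)
     (ev_first m./2) (od_first m./2)) as [b Hb].
  + lia.
  + move=> i; rewrite /ev_first; case: ifP; lia.
  + move=> i; rewrite /od_first; case: ifP; lia.
  + move=> i j; rewrite /ev_first; case: ifP; case: ifP; lia.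
  + move=> i j; rewrite /od_first; case: ifP; case: ifP; lia.
  + move=> a b' ha hb; rewrite /ev_first /od_first ha ifF; last by lia.
    apply: aa_even; last by lia.
    by apply: (@not_odd2 _ (a + b' + 1)); lia.
  exists b; rewrite Hb add0r expr2.
  have -> : \det (\matrix_(a < m./2, c < m./2) aa x (ev_first m./2 a + od_first m./2 c + 2)%N)
           = Ex (sh x) m./2.
    rewrite /Ex; congr (\det _); apply/matrixP => i j; rewrite !mxE /ev_first /od_first.
    by rewrite !ltn_ord -aa_odd; congr (aa _ _); lia.
  have -> : \det (\matrix_(a < m./2, c < m./2) aa x (ev_first m./2 (m./2 + a) + od_first m./2 (m./2 + c) + 2)%N)
           = Ex (sh x) m./2.
    rewrite /Ex; congr (\det _); apply/matrixP => i j; rewrite !mxE /ev_first /od_first.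
    by rewrite !ifF; try lia; rewrite -aa_odd; congr (aa _ _); lia.
  by ring.
Qed.

Local Close Scope ring_scope.

Definition dist (a b : nat) := (a - b) + (b - a).
Definition gg k t := 2 ^ k - dist (t %% 2 ^ k.+2) (2 ^ k.+1).

Lemma mod_decomp t M r q : t = q * M + r -> r < M -> t %% M = r.
Proof. by move=> -> hr; rewrite modnMDl modn_small. Qed.

Lemma gg1 k m : gg k.+1 (2 * m) = 2 * gg k m.
Proof.
rewrite /gg /dist.
have hM : 0 < 2 ^ k.+2 by rewrite expn_gt0.
have := divn_eq m (2 ^ k.+2); have := ltn_pmod m hM.
set r := m %% _; set q := m %/ _ => hr hm.
rewrite (@mod_decomp (2 * m) (2 ^ k.+3) (2 * r) q).
- rewrite !expnS; lia.
- rewrite hm !expnS; lia.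
- move: hr; rewrite !expnS; lia.
Qed.

Lemma gg2 k n : gg k.+1 (2 * n + 1) = gg k n + gg k n.+1.
Proof.
rewrite /gg /dist.
have hM : 0 < 2 ^ k.+2 by rewrite expn_gt0.
have := divn_eq n (2 ^ k.+2); have := ltn_pmod n hM.
set r := n %% _; set q := n %/ _ => hr hn.
rewrite (@mod_decomp (2 * n + 1) (2 ^ k.+3) (2 * r + 1) q); last first.
- move: hr; rewrite !expnS; lia.
- rewrite hn !expnS; lia.
have [hr1|hr1] := ltnP r.+1 (2 ^ k.+2).
  rewrite (@mod_decomp n.+1 (2 ^ k.+2) r.+1 q) //; last by rewrite hn; lia.
  move: hr1; rewrite !expnS; lia.
have hr2 : r.+1 = 2 ^ k.+2 by lia.
rewrite (@mod_decomp n.+1 (2 ^ k.+2) 0 q.+1) //; last by rewrite hn; lia.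
move: hr2; rewrite !expnS; lia.
Qed.

Lemma gg0_odd t : gg 0 t = (t %% 4 == 2).
Proof.
rewrite /gg /dist /= expn0.
have : t %% 4 < 4 by rewrite ltn_pmod.
case: (t %% 4) => [|[|[|[|]]]] //=.
Qed.

Lemma gg0_2n1 n : gg 0 (2 * n + 1) = 0.
Proof. rewrite gg0_odd; apply/eqP; lia. Qed.

Lemma gg0_2m m : gg 0 (2 * m) = odd m.
Proof. rewrite gg0_odd; case: (boolP (odd m)) => om; apply/eqP; move: om; case: (odd m) (odd_double_half m) => /=; lia. Qed.

Lemma gg_0 k : gg k 0 = 0.
Proof. rewrite /gg /dist mod0n !expnS; lia. Qed.

Local Open Scope ring_scope.

Definition Mon (R : comNzRingType) (x : nat -> R) B (c : nat -> nat) :=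
  \prod_(k < B) x (2 ^ k - 1)%N ^+ c k.

Lemma Mon_S (R : comNzRingType) (x : nat -> R) B c :
  Mon x B.+1 c = x 0%N ^+ c 0%N * Mon (sh x) B (fun k => c k.+1).
Proof.
rewrite /Mon big_ord_recl /= expn0 subnn; congr (_ * _).
apply: eq_bigr => k _; rewrite /sh /= expnS.
rewrite /bump /=; have := expn_gt0 2 k; move=> h; congr (x _ ^+ _); lia.
Qed.

Lemma Mon_mul (R : comNzRingType) (x : nat -> R) B c1 c2 :
  Mon x B c1 * Mon x B c2 = Mon x B (fun k => c1 k + c2 k)%N.
Proof. by rewrite /Mon -big_split /=; apply: eq_bigr => k _; rewrite exprD. Qed.

Lemma Mon_ext (R : comNzRingType) (x : nat -> R) B c1 c2 :
  (forall k, (k < B)%N -> c1 k = c2 k) -> Mon x B c1 = Mon x B c2.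
Proof. by move=> H; apply: eq_bigr => k _; rewrite H. Qed.

Lemma Mon0 (R : comNzRingType) (x : nat -> R) B c :
  (forall k, c k = 0%N) -> Mon x B c = 1.
Proof. by move=> H; apply: big1 => k _; rewrite H expr0. Qed.

Lemma sign3 (R : comNzRingType) (b0 b1 b2 : bool) (u v : R) :
  (-1) ^+ b0 * ((-1) ^+ b1 * u * ((-1) ^+ b2 * v)) = (-1) ^+ (b0 (+) b1 (+) b2) * (u * v).
Proof. rewrite !signr_addb; ring. Qed.

Lemma main_mon (R : comNzRingType) B : forall x : nat -> R,
  (forall n, (n < 2 ^ B)%N -> exists b : bool,
      Ex x n = (-1) ^+ b * Mon x B.+1 (fun k => gg k (2 * n + 1))) /\
  (forall m, (m <= 2 ^ B)%N -> exists b : bool,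
      Fx x m = (-1) ^+ b * Mon x B.+1 (fun k => gg k (2 * m))).
Proof.
elim: B => [|B IH] x.
  split.
    move=> n; rewrite expn0 ltnS leqn0 => /eqP ->; exists false.
    rewrite /Ex det_mx00 Mon_S /Mon big_ord0 gg0_2n1; by rewrite expr0 !mulr1.
  move=> m; rewrite expn0 leq_eqVlt ltnS leqn0 => /orP [] /eqP ->.
    have [b Hb] := Fx_step x 0; exists b; rewrite Hb /= /Ex det_mx00.
    by rewrite Mon_S /Mon big_ord0 gg0_2m /= expr1 expr1n !mulr1.
  exists false; rewrite /Fx det_mx00 Mon0 ?mulr1 // => k; exact: gg_0.
split.
  move=> n hn.
  have hp1 : (uphalf n + n./2 = n)%N.
    by have := odd_double_half n; rewrite uphalf_half -muln2; case: (odd n); lia.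
  have hp2 : (n <= 2 * uphalf n <= n.+1)%N.
    by have := odd_double_half n; rewrite uphalf_half -muln2; case: (odd n); lia.
  have [b0 H0] := Ex_step x n.
  have [_ IHF] := IH (sh x).
  have [IHE _] := IH (sh x).
  have [b1 H1] := IHF (uphalf n) ltac:(rewrite expnS in hn; lia).
  have [b2 H2] := IHE (n./2) ltac:(rewrite expnS in hn; lia).
  exists (b0 (+) b1 (+) b2); rewrite H0 H1 H2 sign3 Mon_mul [Mon x B.+2 _]Mon_S gg0_2n1 expr0 mul1r.
  congr (_ * _); apply: Mon_ext => k _; rewrite gg2.
  have := odd_double_half n; rewrite uphalf_half -muln2.
  case: (odd n) => /= h.
    rewrite addnC; congr (gg _ _ + gg _ _); lia.
  congr (gg _ _ + gg _ _); lia.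
move=> [|m] hm.
  exists false; rewrite /Fx det_mx00 Mon0 ?mulr1 // => k; exact: gg_0.
have [b0 H0] := Fx_step x m.
have [_ IHF] := IH (sh x).
have [IHE _] := IH (sh x).
have := odd_double_half m; rewrite -muln2 => hh.
move: H0; case: (boolP (odd m.+1)) => om H0.
  have [b1 H1] := IHE (m./2) ltac:(rewrite expnS in hm; move: om hh; case: (odd m) => //= _; lia).
  exists b0; rewrite H0 H1 [Mon x B.+2 _]Mon_S gg0_2m om expr1.
  rewrite exprMn sqrr_sign mul1r expr2 Mon_mul.
  have em : (2 * m./2 + 1 = m.+1)%N.
    by move: om hh; rewrite /=; case: (odd m) => /=; lia.
  congr (_ * (_ * _)); apply: Mon_ext => k _; rewrite gg1 em.
  by rewrite mul2n -addnn.
have [b1 H1] := IHF ((m.+1)./2) ltac:(rewrite expnS in hm; move: om hh; case: (odd m) => //= _; lia).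
exists b0; rewrite H0 H1 [Mon x B.+2 _]Mon_S gg0_2m (negbTE om) expr0 mul1r.
rewrite exprMn sqrr_sign mul1r expr2 Mon_mul.
have em : (2 * (m.+1)./2 = m.+1)%N.
  by move: om hh; rewrite /=; case: (odd m) => /=; lia.
congr (_ * _); apply: Mon_ext => k _; rewrite gg1 em.
by rewrite mul2n -addnn.
Qed.

Lemma D_mon n : exists b : bool,
  D n = (-1) ^+ b * Mon (xvar (2 * n)) n.+1 (fun k => gg k (2 * n + 1)).
Proof.
have [H _] := main_mon n (xvar (2 * n)).
exact: (H n (ltn_expl n (isT : (1 < 2)%N))).
Qed.

Lemma gg_pos k n : (0 < gg k (2 * n + 1))%N -> (2 ^ k - 1 < 2 * n)%N.
Proof.
rewrite /gg /dist; have := leq_mod (2 * n + 1) (2 ^ k.+2).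
rewrite !expnS; have := expn_gt0 2 k; lia.
Qed.

Definition hX N (c : nat -> nat) (k : nat) : 'X_{1..N} :=
  if insub (2 ^ k - 1)%N is Some j then (U_(j) *+ c k)%MM else 0%MM.

Lemma Mon_X N B c :
  Mon (xvar N) B c = 'X_[\big[+%MM/0%MM]_(k < B) hX N c k] :> {mpoly int[N]}
  \/ exists k, (k < B)%N /\ (N <= 2 ^ k - 1)%N /\ c k <> 0%N.
Proof.
case: (boolP [forall k : 'I_B, (N <= 2 ^ k - 1)%N ==> (c k == 0%N)]) => [/forallP H|].
  left; rewrite /Mon.
  apply: (big_ind2 (fun (p : {mpoly int[N]}) m => p = 'X_[m])).
  - by rewrite mpolyX0.
  - by move=> x1 x2 y1 y2 -> ->; rewrite mpolyXD.
  move=> k _; rewrite /hX /xvar; case: insubP => [j _ _ | hj].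
    by rewrite mpolyXn.
  move: (H k) => /implyP; rewrite leqNgt hj => /(_ isT) /eqP ->.
  by rewrite expr0 mpolyX0.
rewrite negb_forall => /existsP [k]; rewrite negb_imply => /andP [h1 /eqP h2].
by right; exists k.
Qed.

Lemma pow2m1_inj k K : (2 ^ k - 1 = 2 ^ K - 1)%N -> k = K.
Proof.
move=> h; apply: (expnI (isT : (1 < 2)%N)).
have := expn_gt0 2 k; have := expn_gt0 2 K; lia.
Qed.

Lemma mu_eq K n : mu K n = gg K (2 * n + 1).
Proof.
rewrite /mu; have [b ->] := D_mon n.
case: (Mon_X (2 * n) n.+1 (fun k => gg k (2 * n + 1))) => [-> | [k [hk [hN hc]]]]; last first.
  exfalso; apply: hc; case: (posnP (gg k (2 * n + 1))) => // /gg_pos; lia.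
rewrite /degvar; case: insubP => [i hi vi | hi]; last first.
  case: (posnP (gg K (2 * n + 1))) => // /gg_pos; move: hi; lia.
set m := \big[+%MM/0%MM]_(k < n.+1) _.
have -> : \max_(mm <- msupp ((-1) ^+ b * 'X_[m] : {mpoly int[2 * n]})) mm i = m i.
  case: b; rewrite ?mulN1r ?mul1r; last by rewrite msuppX big_seq1.
  by rewrite (perm_big _ (msuppN _)) msuppX big_seq1.
have hK : (K < n.+1)%N.
  rewrite -(ltn_exp2l _ _ (isT : (1 < 2)%N)) expnS.
  have := ltn_expl n (isT : (1 < 2)%N); move: hi; have := expn_gt0 2 K; lia.
rewrite mnm_sumE (bigD1 (Ordinal hK)) //= big1 ?addn0.
  rewrite /hX; case: insubP => [j _ vj | hj]; last by move: hj; rewrite -vi (valP i).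
  by rewrite mulmnE mnm1E (_ : j == i) ?mul1n //; apply/eqP/val_inj; rewrite vj vi.
move=> k hk; rewrite /hX; case: insubP => [j _ vj | hj]; last by rewrite mnm0E.
rewrite mulmnE mnm1E (_ : j == i = false) ?mul0n //; apply/negbTE/eqP => eji.
move/eqP: hk; apply; apply: val_inj => /=; apply: pow2m1_inj; by rewrite -vj -vi eji.
Qed.

Local Close Scope ring_scope.

Theorem theorem5p5 (k : nat) : (1 <= k)%N ->
  (forall i : nat, (i <= 2 ^ k.-1 - 1)%N ->
     [/\ mu k i = 0%N,
         mu k (2 ^ k.-1 + i) = (2 * i + 1)%N,
         mu k (2 ^ k + i) = (2 ^ k - 2 * i - 1)%N &
         mu k (2 ^ k + 2 ^ k.-1 + i) = 0%N]) /\
  (forall n : nat, (2 ^ k.+1 <= n)%N -> mu k n = mu k (n %% 2 ^ k.+1)).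
Proof.
case: k => // k _ /=; have hP := expn_gt0 2 k.
split.
  move=> i hi; rewrite !mu_eq /gg /dist !expnS.
  by split; rewrite modn_small; lia.
move=> n _; rewrite !mu_eq /gg.
have hM : (0 < 2 ^ k.+2)%N by rewrite expn_gt0.
have := divn_eq n (2 ^ k.+2); have := ltn_pmod n hM.
set r := n %% _; set q := n %/ _ => hr hn.
rewrite (@mod_decomp (2 * n + 1) (2 ^ k.+3) (2 * r + 1) q).
- rewrite modn_small //; move: hr; rewrite !expnS; lia.
- rewrite hn !expnS; lia.
- move: hr; rewrite !expnS; lia.
Qed.
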